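(* Let $\phi\in(0,1)$ and $\gamma_1\in[1,2)$ with $\gamma_1\phi\ne1$. For $\gamma_2\in\mathbb{R}$ let $z_1(\gamma_2),z_2(\gamma_2)$ be the two roots of $z^2-(2-\gamma_1-\gamma_2+\gamma_1\gamma_2\phi)z+(\gamma_1-1)(\gamma_2-1)=0$, let $\Delta(\gamma_2):=(2-\gamma_1-\gamma_2+\gamma_1\gamma_2\phi)^2-4(\gamma_1-1)(\gamma_2-1)$, let $\xi_1,\xi_2$ be the roots of $\Delta(\gamma_2)=0$ with $|\xi_1|\le|\xi_2|$, and $f(\gamma_2):=\max\{|z_1(\gamma_2)|,|z_2(\gamma_2)|\}$. Then $1\le\xi_1$, and: (a) if $\gamma_1\in[1,\frac{2}{1+\sqrt{1-\phi}}]$, then $f$ is non-increasing on $[1,\gamma_1]$; (b) if $\gamma_1\in[\frac{2}{1+\sqrt{1-\phi}},2)$, then $\xi_1\le\gamma_1$, $f$ is non-increasing on $[1,\xi_1]$, and $f(\gamma_2)=\sqrt{(\gamma_1-1)(\gamma_2-1)}$ for all $\gamma_2\in[\xi_1,\gamma_1]$. *)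

(* Defs.v *)
From HB Require Import structures.
From mathcomp Require Import all_boot all_order all_algebra.
From mathcomp Require Import complex.
Set Implicit Arguments. Unset Strict Implicit. Unset Printing Implicit Defensive.
Import Order.TTheory GRing.Theory Num.Theory.
Local Open Scope ring_scope.

Definition bcoef {R : rcfType} (phi g1 g2 : R) : R :=
  2 - g1 - g2 + g1 * g2 * phi.

Definition ccoef {R : rcfType} (g1 g2 : R) : R := (g1 - 1) * (g2 - 1).

Definition charpoly {R : rcfType} (phi g1 g2 : R) : {poly R[i]} :=
  'X^2 - (real_complex R (bcoef phi g1 g2))%:P * 'X + (real_complex R (ccoef g1 g2))%:P.

Definition Delta {R : rcfType} (phi g1 g2 : R) : R :=
  bcoef phi g1 g2 ^+ 2 - 4 * ccoef g1 g2.

Definition fmax {R : rcfType} (z1 z2 : R -> R[i]) (g2 : R) : R :=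
  Num.max (ComplexField.Normc.normc (z1 g2)) (ComplexField.Normc.normc (z2 g2)).

(* Main.v *)
Require Import Defs.
From HB Require Import structures.
From mathcomp Require Import all_boot all_order all_algebra.
From mathcomp Require Import complex.
From mathcomp Require Import ring lra.
Import Order.TTheory GRing.Theory Num.Theory.
Local Open Scope ring_scope.

Lemma coefs (R : rcfType) (b c : R) (z1 z2 : R[i]) :
  'X^2 - (real_complex R b)%:P * 'X + (real_complex R c)%:P = ('X - z1%:P) * ('X - z2%:P) ->
  exists p q r s : R, [/\ z1 = Complex p q, z2 = Complex r s,
    b = p + r, 0 = q + s & (c = p * r - q * s /\ 0 = p * s + q * r)].
Proof.
move=> H.
have H0 := congr1 (fun P => P.[0]) H.
have H1 := congr1 (fun P => P.[1]) H.
move: H0 H1 => /=. rewrite !hornerE /= expr0n /= expr1n subr0 add0r mulrNN => H0 H1.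
have H2 : real_complex R b = z1 + z2.
  have -> : real_complex R b = 1 + real_complex R c - (1 - real_complex R b + real_complex R c) by ring.
  rewrite H1 H0; ring.
case: z1 H0 H2 {H H1} => p q; case: z2 => r s.
move=> /eqP H0 /eqP H2.
move: H0 H2; rewrite !eq_complex /= => /andP[/eqP e1 /eqP e2] /andP[/eqP e3 /eqP e4].
by exists p, q, r, s.
Qed.

Lemma maxabs (R : rcfType) (p r : R) :
  Num.max `|p| `|r| = (`|p + r| + `|p - r|) / 2.
Proof.
case: leP => h;
have [hp|hp] := lerP 0 p; have [hr|hr] := lerP 0 r;
have [h1|h1] := lerP 0 (p+r); have [h2|h2] := lerP 0 (p-r);
rewrite ?(ger0_norm hp) ?(ltr0_norm hp) ?(ger0_norm hr) ?(ltr0_norm hr)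
  ?(ger0_norm h1) ?(ltr0_norm h1) ?(ger0_norm h2) ?(ltr0_norm h2) in h *;
 lra.
Qed.

Lemma fval_real (R : rcfType) (phi g1 : R) (z1 z2 : R -> R[i]) t :
  charpoly phi g1 t = ('X - (z1 t)%:P) * ('X - (z2 t)%:P) ->
  0 <= Delta phi g1 t ->
  fmax z1 z2 t = (`|bcoef phi g1 t| + Num.sqrt (Delta phi g1 t)) / 2.
Proof.
rewrite /charpoly => /coefs [p [q [r [s [E1 E2 e3 e4 [e1 e2]]]]]].
rewrite /fmax /Delta E1 E2 /= e1 e3.
have hs : s = - q by lra.
have hq0 : q * (r - p) = p * s + q * r by rewrite hs; ring.
rewrite -e2 in hq0.
have [q0|qn0] := eqVneq q 0.
  rewrite q0 in hs; rewrite hs q0 oppr0 expr0n /= !addr0 !sqrtr_sqr mul0r subr0.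
  have -> : (p + r) ^+ 2 - 4 * (p * r) = (p - r) ^+ 2 by ring.
  by rewrite sqrtr_sqr => _; apply: maxabs.
move=> hD; exfalso.
move/eqP: hq0; rewrite mulf_eq0 (negbTE qn0) /= subr_eq0 => /eqP rp.
have : 0 < q ^+ 2 by rewrite exprn_even_gt0 //= qn0 orbT.
rewrite rp hs in hD. nra.
Qed.

Lemma fval_cplx (R : rcfType) (phi g1 : R) (z1 z2 : R -> R[i]) t :
  charpoly phi g1 t = ('X - (z1 t)%:P) * ('X - (z2 t)%:P) ->
  Delta phi g1 t <= 0 ->
  fmax z1 z2 t = Num.sqrt (ccoef g1 t).
Proof.
rewrite /charpoly => /coefs [p [q [r [s [E1 E2 e3 e4 [e1 e2]]]]]].
rewrite /fmax /Delta E1 E2 /= e1 e3.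
have hs : s = - q by lra.
have hq0 : q * (r - p) = p * s + q * r by rewrite hs; ring.
rewrite -e2 in hq0.
move=> hD.
have rp : r = p.
  have [q0|qn0] := eqVneq q 0.
    rewrite hs q0 in hD.
    have : (p - r) ^+ 2 = 0.
      apply/le_anti; rewrite sqr_ge0 andbT.
      have -> : (p - r) ^+ 2 = (p + r) ^+ 2 - 4 * (p * r - 0 * - 0) by ring.
      by [].
    by move/eqP; rewrite sqrf_eq0 subr_eq0 => /eqP.
  by move/eqP: hq0; rewrite mulf_eq0 (negbTE qn0) /= subr_eq0 => /eqP.
rewrite rp hs sqrrN maxxx; congr Num.sqrt; ring.
Qed.

Lemma sqrt_step (R : rcfType) (A al be h : R) :
  0 <= A -> 0 <= h -> h <= al -> al <= be ->
  Num.sqrt (A ^+ 2 * (al - h) * (be - h)) + A * h <= Num.sqrt (A ^+ 2 * al * be).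
Proof.
move=> hA hh hha hab.
set X := Num.sqrt (A ^+ 2 * al * be).
have hab0 : 0 <= al * be by nra.
have hX0 : 0 <= A ^+ 2 * al * be by rewrite -mulrA; apply: mulr_ge0 => //; apply: sqr_ge0.
have hX2 : X ^+ 2 = A ^+ 2 * al * be by rewrite sqr_sqrtr.
have hX : 0 <= X by apply: sqrtr_ge0.
have hhh : h * h <= al * be by nra.
have hA2 : 0 <= A ^+ 2 by apply: sqr_ge0.
have hAh : A * h <= X.
  have : A ^+ 2 * (h * h) <= A ^+ 2 * (al * be) by apply: ler_wpM2l.
  move=> hh2.
  rewrite -(ger0_norm (mulr_ge0 hA hh)) -sqrtr_sqr ler_sqrt //; nra.
have hXu : 2 * X <= A * (al + be).
  have hu : 0 <= A * (al + be) by nra.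
  rewrite -(ger0_norm hu) -(ger0_norm (mulr_ge0 _ hX)) // -!sqrtr_sqr ler_sqrt; last by apply: sqr_ge0.
  rewrite exprMn hX2; have := mulr_ge0 hA2 (sqr_ge0 (al - be)); nra.
rewrite -lerBrDr.
have hXAh : 0 <= X - A * h by rewrite subr_ge0.
rewrite -(ger0_norm hXAh) -sqrtr_sqr ler_sqrt; last by apply: sqr_ge0.
have hXu' : 0 <= A * (al + be) - 2 * X by rewrite subr_ge0.
have := mulr_ge0 (mulr_ge0 hA hh) hXu'. nra.
Qed.

Arguments fval_real {R phi g1 z1 z2 t}.
Arguments fval_cplx {R phi g1 z1 z2 t}.
Arguments sqrt_step {R A al be h}.

Lemma le_sq (R : rcfType) (x y : R) : 0 <= y -> x ^+ 2 <= y ^+ 2 -> x <= y.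
Proof.
move=> hy h; apply: le_trans (ler_norm x) _.
by rewrite -sqrtr_sqr -(ger0_norm hy) -sqrtr_sqr ler_sqrt // sqr_ge0.
Qed.

Lemma caseA_aux (R : rcfType) (g1 s : R) : 0 <= s -> s < 1 -> 1 <= g1 ->
  g1 * (1 + s) <= 2 -> 0 <= 3 * g1 - 2 - g1 ^+ 2 * ((1 - s) * (1 + s)).
Proof.
move=> hs0 hs1 hg1 hc.
have hprod : 0 <= (g1 - 1) * (2 - g1 * (1 + s)) by rewrite mulr_ge0 // subr_ge0.
have hm := mulr_ge0 (_ : 0 <= 1 - s) hprod.
have hm2 := mulr_ge0 (_ : 0 <= 2 * s + s ^+ 2) (_ : 0 <= g1 - 1).
have := hm ltac:(by rewrite subr_ge0 ltW).
have := hm2 ltac:(by rewrite addr_ge0 ?mulr_ge0 ?sqr_ge0) ltac:(by rewrite subr_ge0).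
nra.
Qed.

Theorem mainTheorem18 (R : rcfType) (phi g1 : R)
  (z1 z2 : R -> R[i]) (xi1 xi2 : R) :
  0 < phi -> phi < 1 -> 1 <= g1 -> g1 < 2 -> g1 * phi != 1 ->
  (forall g2 : R, charpoly phi g1 g2 = ('X - (z1 g2)%:P) * ('X - (z2 g2)%:P)) ->
  (forall x : R, Delta phi g1 x = 0 <-> (x = xi1 \/ x = xi2)) ->
  `|xi1| <= `|xi2| ->
  1 <= xi1 /\
  (g1 <= 2 / (1 + Num.sqrt (1 - phi)) ->
     forall x y : R, 1 <= x -> x <= y -> y <= g1 -> fmax z1 z2 y <= fmax z1 z2 x) /\
  (2 / (1 + Num.sqrt (1 - phi)) <= g1 ->
     [/\ xi1 <= g1,
         forall x y : R, 1 <= x -> x <= y -> y <= xi1 -> fmax z1 z2 y <= fmax z1 z2 x &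
         forall x : R, xi1 <= x -> x <= g1 ->
           fmax z1 z2 x = Num.sqrt ((g1 - 1) * (x - 1))]).
Proof.
move=> hp0 hp1 hg1 hg2 hgp Hz Hxi Hxin.
pose k := g1 - 1. pose a := g1 * phi - 1. pose c0 := 2 - g1.
have ha : a != 0 by rewrite /a subr_eq0.
have ha2 : 0 < a ^+ 2 by rewrite exprn_even_gt0 //= ha orbT.
have ha2' : a ^+ 2 != 0 by rewrite gt_eqF.
have hK0 : 0 <= k * phi * (1 - phi).
  by rewrite mulr_ge0 ?mulr_ge0 // ?subr_ge0 /k ?subr_ge0 // ltW.
pose S := Num.sqrt (k * phi * (1 - phi)).
have hS : S ^+ 2 = k * phi * (1 - phi) by rewrite sqr_sqrtr.
have hS0 : 0 <= S by apply: sqrtr_ge0.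
pose B := 2 * k - a * c0.
pose rm := (B - 2 * g1 * S) / a ^+ 2.
pose rp := (B + 2 * g1 * S) / a ^+ 2.
have hrm : rm * a ^+ 2 = B - 2 * g1 * S by rewrite /rm divfK.
have hrp : rp * a ^+ 2 = B + 2 * g1 * S by rewrite /rp divfK.
have hb : forall t, bcoef phi g1 t = c0 + a * t by move=> t; rewrite /bcoef /c0 /a; ring.
have hD : forall t, Delta phi g1 t = a ^+ 2 * (t - rm) * (t - rp).
  move=> t.
  have E : a ^+ 2 * (t - rm) * (t - rp) =
     a ^+ 2 * t ^+ 2 - 2 * B * t + (B ^+ 2 - 4 * g1 ^+ 2 * S ^+ 2) / a ^+ 2.
    by rewrite /rm /rp; field.
  have E2 : B ^+ 2 - 4 * g1 ^+ 2 * S ^+ 2 = (c0 ^+ 2 + 4 * k) * a ^+ 2.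
    by rewrite hS /B /c0 /k /a; ring.
  rewrite E E2 mulfK // /Delta hb /ccoef /B /k; ring.
have hkK : 0 <= k + g1 * phi * (g1 - g1 * phi).
  have hg0 : 0 <= g1 := le_trans ler01 hg1.
  have hu0 : 0 <= g1 * phi := mulr_ge0 hg0 (ltW hp0).
  have hu1 : 0 <= g1 - g1 * phi by rewrite subr_ge0; nra.
  have := mulr_ge0 hu0 hu1; rewrite /k; lra.
have hrm1 : 1 <= rm.
  have e : B - a ^+ 2 = k + g1 * phi * (g1 - g1 * phi) by rewrite /B /k /a /c0; ring.
  have e2 : (2 * g1 * S) ^+ 2 = 4 * k * (g1 * phi * (g1 - g1 * phi)) by rewrite exprMn hS /k; ring.
  have : 2 * g1 * S <= k + g1 * phi * (g1 - g1 * phi).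
    apply: le_sq => //; rewrite e2.
    have := sqr_ge0 (k - g1 * phi * (g1 - g1 * phi)); nra.
  move=> h; rewrite -(ler_pM2r ha2) hrm mul1r; lra.
have hrmp : rm <= rp.
  rewrite -(ler_pM2r ha2) hrm hrp.
  have : 0 <= g1 * S by rewrite mulr_ge0 // (le_trans _ hg1).
  lra.
have hxi1 : xi1 = rm.
  have Drm : Delta phi g1 rm = 0 by rewrite hD subrr mulr0 mul0r.
  have Drp : Delta phi g1 rp = 0 by rewrite hD subrr mulr0.
  have : Delta phi g1 xi1 = 0 by apply/Hxi; left.
  rewrite hD => /eqP; rewrite !mulf_eq0 ?sqrf_eq0 ?(negbTE ha2') ?(negbTE ha) /= !subr_eq0 => /orP[/eqP //|/eqP x1].
  have [|e] := (proj1 (Hxi rm) Drm); first by move=> ->.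
  move: Hxin; rewrite x1 -e !ger0_norm; last 2 first.
  - exact: le_trans ler01 hrm1.
  - exact: le_trans ler01 (le_trans hrm1 hrmp).
  move=> h; apply/le_anti; rewrite h hrmp //.
have Dge : forall t, t <= rm -> 0 <= Delta phi g1 t.
  move=> t ht; rewrite hD -mulrA mulr_ge0 ?sqr_ge0 // mulr_le0 // subr_le0 //.
  exact: le_trans ht hrmp.
have mono : forall x y, x <= y -> y <= rm -> fmax z1 z2 y <= fmax z1 z2 x.
  move=> x y hxy hyr.
  rewrite (fval_real (Hz x)) ?Dge ?(le_trans hxy hyr) // (fval_real (Hz y)) ?Dge //.
  apply: ler_wpM2r; first by rewrite invr_ge0.
  have hA2 : `|a| ^+ 2 = a ^+ 2 by rewrite real_normK ?num_real.
  have st := sqrt_step (normr_ge0 a) (_ : 0 <= y - x) (_ : y - x <= rm - x) (_ : rm - x <= rp - x).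
  have eDx : Delta phi g1 x = `|a| ^+ 2 * (rm - x) * (rp - x) by rewrite hD hA2; ring.
  have eDy : Delta phi g1 y = `|a| ^+ 2 * (rm - x - (y - x)) * (rp - x - (y - x)) by rewrite hD hA2; ring.
  have hby : `|bcoef phi g1 y| <= `|bcoef phi g1 x| + `|a| * (y - x).
    have -> : bcoef phi g1 y = bcoef phi g1 x + a * (y - x) by rewrite !hb; ring.
    apply: le_trans (ler_normD _ _) _.
    by rewrite normrM (ger0_norm (_ : 0 <= y - x)) // subr_ge0.
  rewrite eDx eDy.
  have := st ltac:(by rewrite subr_ge0) ltac:(by rewrite lerD2r) ltac:(by rewrite lerD2r).
  lra.
pose s := Num.sqrt (1 - phi).
have hs2 : s ^+ 2 = 1 - phi by rewrite sqr_sqrtr // subr_ge0 ltW.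
have hs0 : 0 <= s by apply: sqrtr_ge0.
have hs1 : s < 1 by nra.
have h1s : 0 < 1 + s by lra.
have ephi : (1 - s) * (1 + s) = phi.
  have -> : (1 - s) * (1 + s) = 1 - s ^+ 2 by ring.
  rewrite hs2; ring.
have eDg : Delta phi g1 g1 = g1 ^+ 2 * phi * (((1 - s) * g1 - 2) * ((1 + s) * g1 - 2)).
  have -> : ((1 - s) * g1 - 2) * ((1 + s) * g1 - 2) = (1 - s) * (1 + s) * g1 ^+ 2 - 4 * g1 + 4 by ring.
  rewrite ephi /Delta /bcoef /ccoef; ring.
have hg0 : 0 <= g1 := le_trans ler01 hg1.
have hf1 : (1 - s) * g1 - 2 <= 0 by nra.
have hgp2 : 0 <= g1 ^+ 2 * phi by rewrite mulr_ge0 ?sqr_ge0 // ltW.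
split; first by rewrite hxi1.
split.
  move=> hca x y h1x hxy hyg.
  have hc : g1 * (1 + s) <= 2 by rewrite -ler_pdivlMr.
  have hDg : 0 <= Delta phi g1 g1.
    rewrite eDg mulr_ge0 // mulr_le0 //; lra.
  have hw : a ^+ 2 * g1 <= B.
    have e : B - a ^+ 2 * g1 = g1 * phi * (3 * g1 - 2 - g1 ^+ 2 * ((1 - s) * (1 + s))).
      by rewrite ephi /B /a /k /c0; ring.
    rewrite -subr_ge0 e; apply: mulr_ge0; first by rewrite mulr_ge0 // ltW.
    exact: caseA_aux.
  have hsum : 2 * g1 <= rm + rp.
    rewrite -(ler_pM2r ha2) mulrDl; nra.
  have hg1rm : g1 <= rm.
    rewrite leNgt; apply/negP => hlt.
    move: hDg; rewrite hD -mulrA pmulr_rge0 // => hpr.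
    nra.
  by apply: mono => //; exact: le_trans hyg hg1rm.
move=> hcb.
have hc : 2 <= g1 * (1 + s) by rewrite -ler_pdivrMr.
have hDg : Delta phi g1 g1 <= 0.
  rewrite eDg mulr_ge0_le0 // mulr_le0_ge0 //; lra.
have [hlo hhi] : rm <= g1 /\ g1 <= rp.
  move: hDg; rewrite hD -mulrA pmulr_rle0 // => hpr.
  split; nra.
split; first by rewrite hxi1.
  by move=> x y _ hxy hy; apply: mono => //; rewrite -hxi1.
move=> x hx hxg; rewrite hxi1 in hx.
apply: (fval_cplx (Hz x)).
rewrite hD; apply: mulr_ge0_le0.
  by rewrite mulr_ge0 ?sqr_ge0 // subr_ge0.
by rewrite subr_le0; exact: le_trans hxg hhi.
Qed.
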